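(* For every integer $m\ge1$, every $k\ge1$ and all integers $n_1,\dots,n_k$ (of arbitrary signs), $$M\big(\mathcal G(m,n_1)\,\mathcal G(m,n_2)\cdots\mathcal G(m,n_k)\big)=M\big(\mathcal G(m,n_1+n_2+\cdots+n_k)\big).$$
   Context: Grid conventions: an $m$-by-$N$ grid has vertices $(i,j)$, $1\le i\le m$ (rows), $1\le j\le N$ (columns); horizontal edges join $(i,j),(i,j+1)$, vertical edges join $(i,j),(i+1,j)$. A signed graph is a graph each of whose edges carries a sign $+1$ or $-1$ (parallel edges allowed). For a signed graph $\mathcal G$, $M(\mathcal G)$ denotes the sum over all perfect matchings of $\mathcal G$ of the product of the signs of the edges in the matching (the empty graph has $M=1$). For $m\ge1$ and $n\ge 1$, $\mathcal G(m,n)$ is the $m$-by-$n$ grid graph with all edges of sign $+1$. For $n\le 0$, $\mathcal G(m,n)$ has the vertex set of the $m$-by-$(2-n)$ grid, all horizontal edges of that grid with sign $+1$, the vertical edges lying in columns $2,3,\dots,1-n$ with sign $-1$, and no vertical edges in columns $1$ and $2-n$. A signed graph of width $m$ is a signed graph whose vertex set is that of an $m$-by-$N$ grid for some $N\ge1$ and whose edges are edges of that grid. For signed graphs $\mathcal G_1,\mathcal G_2$ of width $m$ (with $N_1$ and $N_2$ columns), the adjoined graph $\mathcal G_1\mathcal G_2$ is the signed graph of width $m$ with $N_1+N_2$ columns obtained by placing $\mathcal G_1$ to the left of $\mathcal G_2$ and joining, for each row $i$, the rightmost vertex of row $i$ of $\mathcal G_1$ to the leftmost vertex of row $i$ of $\mathcal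 G_2$ by an edge of sign $+1$. Adjunction is associative. *)

(* Defs.v *)
From HB Require Import structures.
From mathcomp Require Import all_boot all_order all_algebra.
Set Implicit Arguments. Unset Strict Implicit. Unset Printing Implicit Defensive.
Import Order.TTheory GRing.Theory Num.Theory.
Local Open Scope ring_scope.

(* Conventions: rows and columns are 0-indexed here: vertex (i,j) with
   i < m, j < N corresponds to the paper's (i+1, j+1).
   A signed graph of width m is encoded by its number of columns and two
   weight functions with values in {-1,0,1}:
   hw i j = sign of the horizontal edge (i,j)--(i,j+1) (0 if absent),
   vw i j = sign of the vertical edge (i,j)--(i+1,j) (0 if absent).
   (The graphs occurring here have no parallel edges.) *)
Record sgraph := SGraph { ncols : nat; hw : nat -> nat -> int; vw : nat -> nat -> int }.

(* Candidate edges of the m-by-N grid: (false,(i,j)) is horizontal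
   (i,j)--(i,j+1), (true,(i,j)) is vertical (i,j)--(i+1,j). *)
Definition gedge (m N : nat) := (bool * ('I_m * 'I_N))%type.

Definition edge_valid (m N : nat) (e : gedge m N) : bool :=
  let: (b, (i, j)) := e in
  if b then (i.+1 < m)%N else (j.+1 < N)%N.

Definition edge_covers (m N : nat) (e : gedge m N) (v : 'I_m * 'I_N) : bool :=
  let: (b, (i, j)) := e in
  ((v.1 : nat) == i) && ((v.2 : nat) == j) ||
  (if b then ((v.1 : nat) == i.+1) && ((v.2 : nat) == j)
        else ((v.1 : nat) == i) && ((v.2 : nat) == j.+1)).

Definition perfect_matching (m N : nat) (S : {set gedge m N}) : bool :=
  [forall e in S, edge_valid e] &&
  [forall v : 'I_m * 'I_N, #|[set e in S | edge_covers e v]| == 1%N].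

Definition edge_weight (m : nat) (G : sgraph) (e : gedge m (ncols G)) : int :=
  let: (b, (i, j)) := e in if b then vw G i j else hw G i j.

(* M(G): sum over perfect matchings of G of the product of signs; perfect
   matchings of the grid using an absent edge (weight 0) contribute 0. *)
Definition Msum (m : nat) (G : sgraph) : int :=
  \sum_(S : {set gedge m (ncols G)} | perfect_matching S)
     \prod_(e in S) edge_weight e.

(* The graph G(m,n) (independent of m in this encoding). *)
Definition Gmn (n : int) : sgraph :=
  if 0 < n then SGraph `|n|%N (fun _ _ => 1) (fun _ _ => 1)
  else SGraph `|2 - n|%N (fun _ _ => 1)
         (fun _ j => if (1 <= j)%N && (j <= `|2 - n|%N - 2)%N then -1 else 0).

(* Adjunction G1 G2 (G1 on the left), with a +1 edge joining the rightmost
   column of G1 to the leftmost column of G2 in each row. *)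
Definition adjoin (G1 G2 : sgraph) : sgraph :=
  SGraph (ncols G1 + ncols G2)
    (fun i j => if (j.+1 < ncols G1)%N then hw G1 i j
                else if j.+1 == ncols G1 then 1
                else hw G2 i (j - ncols G1))
    (fun i j => if (j < ncols G1)%N then vw G1 i j else vw G2 i (j - ncols G1)).

Definition adjoin_all (n0 : int) (ns : seq int) : sgraph :=
  foldl (fun G n => adjoin G (Gmn n)) (Gmn n0) ns.

(* Main.v *)
Require Import Defs.
From mathcomp Require Import all_boot all_order all_algebra.
From mathcomp Require Import zify.
From Stdlib Require Import FunctionalExtensionality.
Import Order.TTheory GRing.Theory Num.Theory.
Local Open Scope ring_scope.
Set Implicit Arguments. Unset Strict Implicit. Unset Printing Implicit Defensive.

Definition mx (m : nat) := {set 'I_m} -> {set 'I_m} -> int.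
Definition mmul {m} (A B : mx m) : mx m := fun S T => \sum_U A S U * B U T.
Definition mid {m} : mx m := fun S T => (S == T)%:R.

Lemma mmulA m (A B C : mx m) : mmul (mmul A B) C = mmul A (mmul B C).
Proof.
apply: functional_extensionality => S; apply: functional_extensionality => T.
rewrite /mmul.
under eq_bigr do rewrite big_distrl /=.
rewrite exchange_big /=; apply: eq_bigr => U _.
rewrite big_distrr /=; apply: eq_bigr => V _; by rewrite mulrA.
Qed.

Lemma mmul1l m (A : mx m) : mmul mid A = A.
Proof.
apply: functional_extensionality => S; apply: functional_extensionality => T.
rewrite /mmul /mid (bigD1 S) //= eqxx mul1r big1 ?addr0 // => U /negbTE.
by rewrite eq_sym => ->; rewrite mul0r.
Qed.

Lemma mmul1r m (A : mx m) : mmul A mid = A.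
Proof.
apply: functional_extensionality => S; apply: functional_extensionality => T.
rewrite /mmul /mid (bigD1 T) //= eqxx mulr1 big1 ?addr0 // => U /negbTE.
by move=> ->; rewrite mulr0.
Qed.

Fixpoint mpow {m} (A : mx m) n := if n is k.+1 then mmul (mpow A k) A else mid.

Lemma mpowD m (A : mx m) a b : mpow A (a + b) = mmul (mpow A a) (mpow A b).
Proof.
elim: b => [|b IH]; first by rewrite addn0 /= mmul1r.
by rewrite addnS /= IH mmulA.
Qed.

Lemma mpowSl m (A : mx m) a : mpow A a.+1 = mmul A (mpow A a).
Proof. by rewrite -add1n mpowD /= mmul1l. Qed.

Lemma mpow_inv m (A B : mx m) a b : mmul A B = mid -> (b <= a)%N ->
  mmul (mpow A a) (mpow B b) = mpow A (a - b).
Proof.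
move=> AB; elim: b a => [|b IH] a ha; first by rewrite /= mmul1r subn0.
case: a ha => // a ha.
rewrite [mpow B _]mpowSl /= mmulA -(mmulA A) AB mmul1l IH //.
Qed.

Definition belowc {m} (Y : {set 'I_m}) (i : 'I_m) : nat := (\sum_(k in Y) (k.+1 == i :> nat))%N.
Definition rowok {m} (S T Y : {set 'I_m}) (i : 'I_m) : bool :=
  ((i \in Y) ==> (i.+1 < m)%N) && ((i \in S) + (i \in T) + (i \in Y) + belowc Y i == 1)%N.
Definition colok {m} (S T Y : {set 'I_m}) : bool := [forall i, rowok S T Y i].
Definition K {m} (w : nat -> int) : mx m :=
  fun S T => \sum_(Y | colok S T Y) \prod_(i in Y) w i.

Lemma colokC m (S T Y : {set 'I_m}) : colok S T Y = colok T S Y.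
Proof. by apply: eq_forallb => i; rewrite /rowok (addnC (_ \in S)). Qed.

Lemma KC m w (S T : {set 'I_m}) : K w S T = K w T S.
Proof. by apply: eq_bigl => Y; rewrite colokC. Qed.

Lemma belowc0 m (i : 'I_m) : belowc set0 i = 0%N.
Proof. by rewrite /belowc big_set0. Qed.

Lemma K0 m (S T : {set 'I_m}) : K (fun _ => 0) S T = (T == ~: S)%:R.
Proof.
rewrite /K.
have -> : \sum_(Y | colok S T Y) \prod_(i in Y) (0:int) =
          \sum_(Y | colok S T Y) (Y == set0)%:R.
  by apply: eq_bigr => Y _; rewrite prodr_const expr0n cards_eq0.
rewrite big_mkcond (bigD1 set0) //= big1 ?addr0; last first.
  by move=> Y /negbTE ->; rewrite if_same.
rewrite eqxx.
have -> : colok S T set0 = (T == ~: S).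
  apply/forallP/eqP => [H|->] .
    apply/setP => i; move: (H i); rewrite /rowok in_set0 belowc0 in_setC.
    by case: (i \in S); case: (i \in T).
  by move=> i; rewrite /rowok in_set0 belowc0 in_setC; case: (i \in S).
by case: (T == ~: S).
Qed.

Definition Tstar m (R Y2 : {set 'I_m}) : {set 'I_m} :=
  [set i | (i \notin R) || (0 < (i \in Y2) + belowc Y2 i)%N].

Lemma Tstar_uniq m (T R Y2 : {set 'I_m}) : colok (~: T) (~: R) Y2 -> T = Tstar R Y2.
Proof.
move=> /forallP H; apply/setP => i; move: (H i) => /andP [_ /eqP].
rewrite !in_setC inE.
case: (i \in T); case: (i \in R); case: (i \in Y2) => /=; lia.
Qed.

Lemma alt_sum m (D : {set 'I_m}) :
  \sum_(Y : {set 'I_m} | Y \subset D) (-1) ^+ #|Y| = (D == set0)%:R :> int.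
Proof.
have [->|/set0Pn [x xD]] := eqVneq D set0.
  rewrite ?eqxx (big_pred1 set0) ?cards0 ?expr0 // => Y.
  by rewrite subset0.
rewrite /=.
set s := \sum_(Y | _) _.
pose t (Y : {set 'I_m}) := if x \in Y then Y :\ x else x |: Y.
have tK : involutive t.
  move=> Y; rewrite /t; case xY: (x \in Y).
    by rewrite !inE eqxx /= setD1K.
  by rewrite !inE eqxx /= setU1K ?xY.
have : s = - s.
  rewrite {1}/s (reindex_inj (inv_inj tK)) /s -sumrN.
  apply: eq_big => Y.
    rewrite /t; case: ifP => xY.
      apply/idP/idP => [H|H]; last by apply: subset_trans (subD1set _ _) H.
      by rewrite -(setD1K xY) subUset sub1set xD.
    by rewrite subUset sub1set xD.
  move=> _; rewrite /t; case: ifP => xY.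
    by rewrite [in RHS](cardsD1 x) xY exprS mulN1r opprK.
  by rewrite cardsU1 xY exprS mulN1r.
lia.
Qed.

Definition Qd m (S R D : {set 'I_m}) : bool :=
  [forall i, ((i \in D) ==> (i.+1 < m)%N) &&
     ((i \in S) + (i \notin R) + (i \in D) + belowc D i == 1)%N].

Lemma belowc_split m (D Y : {set 'I_m}) i : Y \subset D ->
  belowc D i = (belowc (D :\: Y) i + belowc Y i)%N.
Proof.
move=> YD; rewrite /belowc (big_setID Y) /= addnC.
by rewrite (setIidPr YD).
Qed.

Lemma split_ok m (S R D Y2 : {set 'I_m}) : Y2 \subset D ->
  colok S (Tstar R Y2) (D :\: Y2) && colok (~: Tstar R Y2) (~: R) Y2 = Qd S R D.
Proof.
move=> YD.
have key : forall i, rowok S (Tstar R Y2) (D :\: Y2) i && rowok (~: Tstar R Y2) (~: R) Y2 i =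
   ((i \in D) ==> (i.+1 < m)%N) &&
     ((i \in S) + (i \notin R) + (i \in D) + belowc D i == 1)%N.
  move=> i; rewrite /rowok (belowc_split i YD) !in_setC !inE.
  have := subsetP YD i.
  case: (i \in Y2); case: (i \in D); case: (i \in S); case: (i \in R);
    case: (i.+1 < m)%N => //= H; try (by have := H isT).
  all: rewrite ?andbT ?andbF ?andTb ?andFb; repeat case: eqP => //=; try lia.
rewrite /Qd.
apply/andP/forallP => [[/forallP H1 /forallP H2] i|H].
  by rewrite -key H1 H2.
by split; apply/forallP => i; have := H i; rewrite -key => /andP [].
Qed.

Lemma Qd0 m (S R : {set 'I_m}) : Qd S R set0 = (S == R).
Proof.
apply/forallP/eqP => [H|->].
  apply/setP => i; move: (H i); rewrite /= in_set0 belowc0 /=.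
  by case: (i \in S); case: (i \in R).
by move=> i; rewrite in_set0 belowc0 /=; case: (i \in R).
Qed.

Lemma inv_key m (S R : {set 'I_m}) :
  \sum_T K (fun _ => 1) S T * K (fun _ => -1) (~: T) (~: R) = (S == R)%:R.
Proof.
have E : forall T, K (fun _ => 1) S T * K (fun _ => -1) (~: T) (~: R) =
   \sum_Y1 \sum_Y2 (if colok S T Y1 && colok (~: T) (~: R) Y2 then (-1)^+#|Y2| else 0).
  move=> T; rewrite /K big_distrl /= big_mkcond; apply: eq_bigr => Y1 _.
  case: (colok S T Y1) => /=; last by rewrite big1.
  rewrite big1_eq mul1r big_mkcond; apply: eq_bigr => Y2 _; by rewrite prodr_const.
rewrite (eq_bigr _ (fun T _ => E T)) exchange_big /=.
under eq_bigr do rewrite exchange_big /=.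
have ET : forall Y1 Y2, \sum_T (if colok S T Y1 && colok (~: T) (~: R) Y2
                                 then (-1)^+#|Y2| else 0 : int) =
   (if colok S (Tstar R Y2) Y1 && colok (~: Tstar R Y2) (~: R) Y2 then (-1)^+#|Y2| else 0).
  move=> Y1 Y2; rewrite (bigD1 (Tstar R Y2)) //= big1 ?addr0 // => T HT.
  by case: ifP => // /andP [_ /Tstar_uniq HT']; rewrite HT' eqxx in HT.
under eq_bigr do under eq_bigr do rewrite ET.
rewrite exchange_big /=.
have EY : forall Y2, \sum_Y1 (if colok S (Tstar R Y2) Y1 && colok (~: Tstar R Y2) (~: R) Y2
                              then (-1)^+#|Y2| else 0 : int) =
    \sum_(D : {set 'I_m} | Y2 \subset D) (if Qd S R D then (-1)^+#|Y2| else 0).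
  move=> Y2.
  rewrite (bigID (fun Y1 => Y1 :&: Y2 == set0)) /= [X in _ + X]big1 ?addr0; last first.
    move=> Y1 /set0Pn [k]; rewrite inE => /andP [kY1 kY2].
    case: ifP => // /andP [/forallP H _]; move: (H k) => /andP [_ /eqP].
    have kT : k \in Tstar R Y2 by rewrite inE kY2 add1n orbT.
    rewrite kT kY1; lia.
  rewrite (reindex_onto (fun D => D :\: Y2) (fun Y1 => Y1 :|: Y2)) /=; last first.
    move=> Y1 /eqP H; apply/setP => k; rewrite !inE.
    case kY2: (k \in Y2); rewrite ?orbT ?orbF //=.
    apply/esym/negP => kY1.
    have : k \in Y1 :&: Y2 by rewrite inE kY1 kY2.
    by rewrite H in_set0.
  apply: eq_big => D.
    have -> : (D :\: Y2) :&: Y2 == set0.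
      by apply/eqP/setP => k; rewrite !inE; case: (k \in Y2); rewrite ?andbF.
    apply/eqP/idP => [<-|H]; first exact: subsetUr.
    apply/setP => k; rewrite !inE; case kY: (k \in Y2) => /=; last by rewrite ?andbT ?orbF.
    by rewrite ?orbT (subsetP H _ kY).
  move=> /andP [_ /eqP HD].
  have YD : Y2 \subset D by rewrite -HD subsetUr.
  by rewrite split_ok.
under eq_bigr do rewrite EY.
rewrite (exchange_big_dep predT) //=.
have ED : forall D : {set 'I_m}, \sum_(Y2 : {set 'I_m} | true && (Y2 \subset D)) (if Qd S R D then (-1)^+#|Y2| else 0 : int)
     = if Qd S R D then (D == set0)%:R else 0.
  move=> D; case: (Qd S R D); last by rewrite big1.
  by rewrite -alt_sum.
under eq_bigr do rewrite ED.
rewrite (bigD1 set0) //= big1 ?addr0; last first.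
  by move=> D /negbTE ->; rewrite if_same.
by rewrite Qd0 eqxx; case: (S == R).
Qed.

Definition C1 m : mx m := @K m (fun _ => 1).
Definition C0 m : mx m := @K m (fun _ => 0).
Definition Cm1 m : mx m := @K m (fun _ => -1).
Arguments C1 m : clear implicits.
Arguments C0 m : clear implicits.
Arguments Cm1 m : clear implicits.
Definition BB m : mx m := mmul (C0 m) (mmul (Cm1 m) (C0 m)).
Arguments BB m : clear implicits.

Lemma C0l m (X : mx m) S T : mmul (C0 m) X S T = X (~: S) T.
Proof.
rewrite /mmul /C0 (bigD1 (~: S)) //= K0 eqxx mul1r big1 ?addr0 // => U /negbTE.
by rewrite K0 => ->; rewrite mul0r.
Qed.

Lemma C0r m (X : mx m) S T : mmul X (C0 m) S T = X S (~: T).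
Proof.
rewrite /mmul /C0 (bigD1 (~: T)) //= K0 setCK eqxx mulr1 big1 ?addr0 // => U HU.
rewrite K0; case: eqP => [E|]; last by rewrite mulr0.
by rewrite E setCK eqxx in HU.
Qed.

Lemma C0C0 m : mmul (C0 m) (C0 m) = mid.
Proof.
apply: functional_extensionality => S; apply: functional_extensionality => T.
by rewrite C0l /C0 K0 setCK /mid eq_sym.
Qed.

Lemma BBE m S T : BB m S T = Cm1 m (~: S) (~: T).
Proof. by rewrite /BB C0l C0r. Qed.

Lemma C1BB m : mmul (C1 m) (BB m) = mid.
Proof.
apply: functional_extensionality => S; apply: functional_extensionality => R.
rewrite /mmul /mid -inv_key; apply: eq_bigr => T _; by rewrite BBE.
Qed.

Lemma BBC1 m : mmul (BB m) (C1 m) = mid.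
Proof.
apply: functional_extensionality => S; apply: functional_extensionality => R.
rewrite /mmul /mid eq_sym -inv_key; apply: eq_bigr => T _.
rewrite BBE /C1 /Cm1 mulrC; congr (_ * _); apply: KC.
Qed.

Lemma mpow_inv2 m (A B : mx m) a b : mmul A B = mid -> (a <= b)%N ->
  mmul (mpow A a) (mpow B b) = mpow B (b - a).
Proof.
move=> AB; elim: a b => [|a IH] b ha; first by rewrite /= mmul1l subn0.
case: b ha => // b ha.
rewrite [mpow B _]mpowSl /= mmulA -(mmulA A) AB mmul1l IH //.
Qed.

Definition Q m (n : int) : mx m :=
  match n with Posz k => mpow (C1 m) k | Negz k => mpow (BB m) k.+1 end.
Arguments Q m n : clear implicits.

Lemma QP m k : Q m (Posz k) = mpow (C1 m) k. Proof. by []. Qed.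
Lemma QN m k : Q m (Negz k) = mpow (BB m) k.+1. Proof. by []. Qed.

Lemma QD m a b : mmul (Q m a) (Q m b) = Q m (a + b).
Proof.
case: a => a; case: b => b; rewrite ?QP ?QN.
- by rewrite -mpowD.
- case: (leqP b.+1 a) => h.
  + rewrite (mpow_inv (C1BB m)) //.
    by have -> : (Posz a + Negz b = Posz (a - b.+1))%R by rewrite NegzE; lia.
  + rewrite (mpow_inv2 (C1BB m)); last exact: ltnW.
    have -> : (Posz a + Negz b = Negz (b - a))%R by rewrite !NegzE; lia.
    by rewrite QN subSn // -ltnS.
- case: (leqP a.+1 b) => h.
  + rewrite (mpow_inv2 (BBC1 m)) //.
    by have -> : (Negz a + Posz b = Posz (b - a.+1))%R by rewrite NegzE; lia.
  + rewrite (mpow_inv (BBC1 m)); last exact: ltnW.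
    have -> : (Negz a + Posz b = Negz (a - b))%R by rewrite !NegzE; lia.
    by rewrite QN subSn // -ltnS.
- by rewrite -mpowD addnS addSn.
Qed.

Lemma Qfold m n0 (ns : seq int) :
  foldl mmul (Q m n0) (map (Q m) ns) = Q m (n0 + \sum_(n <- ns) n).
Proof.
elim: ns n0 => [|n ns IH] n0 /=; first by rewrite big_nil addr0.
by rewrite QD IH big_cons addrA.
Qed.

Fixpoint pm m (c : nat -> nat -> int) N : mx m :=
  if N is k.+1 then mmul (pm c k) (@K m (c k)) else mid.
Arguments pm m c N : clear implicits.

Lemma pmS m c N : pm m c N.+1 = mmul (pm m c N) (@K m (c N)).
Proof. by []. Qed.

Lemma pm_ext m c c' N : (forall j i, (j < N)%N -> c j i = c' j i) -> pm m c N = pm m c' N.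
Proof.
elim: N => [|N IH] H //=.
rewrite IH; last by move=> j i hj; apply: H; apply: ltnW.
congr (mmul _ (K _)); apply: functional_extensionality => i; exact: H.
Qed.

Lemma pm_add m c a b : pm m c (a + b) = mmul (pm m c a) (pm m (fun j => c (a + j)%N) b).
Proof.
elim: b => [|b IH] /=; first by rewrite addn0 mmul1r.
by rewrite addnS /= IH mmulA.
Qed.

Lemma pm_const m w N : pm m (fun _ => w) N = mpow (@K m w) N.
Proof. by elim: N => //= N ->. Qed.

Lemma pm_neg m k :
  pm m (fun j _ => if (1 <= j)%N && (j <= k)%N then -1 else 0) k.+2 = mpow (BB m) k.
Proof.
rewrite pmS -[k.+1]add1n pm_add.
have -> : pm m (fun j _ => if (1 <= j)%N && (j <= k)%N then -1 else 0) 1 = C0 m.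
  by rewrite /= mmul1l.
rewrite (@pm_ext _ _ (fun _ _ => -1)); last first.
  by move=> j i hj; rewrite add1n /=; have -> : (j < k)%N by [].
rewrite pm_const.
have -> : (fun _ : nat => if (1 <= (1 + k)%N)%N && ((1 + k)%N <= k)%N then -1 else 0 : int)
          = fun _ => 0.
  by apply: functional_extensionality => i; rewrite add1n ltnn andbF.
rewrite -/(C0 m) -/(Cm1 m).
elim: k => [|k IH] /=.
  by rewrite mmul1r C0C0.
rewrite -IH /BB !mmulA -(mmulA (C0 m) (C0 m)) C0C0 mmul1l.
by [].
Qed.

Definition colw (G : sgraph) := fun j i => vw G i j.
Definition PG m G := pm m (colw G) (ncols G).
Arguments PG m G : clear implicits.

Lemma PG_adjoin m G1 G2 : PG m (adjoin G1 G2) = mmul (PG m G1) (PG m G2).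
Proof.
rewrite /PG /= pm_add; congr mmul; apply: pm_ext => j i hj; rewrite /colw /=.
  by rewrite hj.
by rewrite ltnNge leq_addr /= addKn.
Qed.

Lemma PG_Gmn m n : PG m (Gmn n) = Q m n.
Proof.
case: n => k.
  case: k => [|k].
    transitivity (mpow (BB m) 0); last by [].
    rewrite -(pm_neg m 0) /PG.
    have -> : ncols (Gmn 0) = 2%N by [].
    apply: pm_ext => j i hj; rewrite /colw /=.
    by case: j hj => [|[|j]].
  rewrite /PG QP.
  have -> : ncols (Gmn (Posz k.+1)) = k.+1 by [].
  rewrite -pm_const; apply: pm_ext => j i hj; by rewrite /colw /=.
rewrite /PG QN -pm_neg.
have -> : ncols (Gmn (Negz k)) = k.+3.
  rewrite /Gmn /=; lia.
apply: pm_ext => j i hj; rewrite /colw /=.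
by case: ifP => // ; rewrite NegzE; lia.
Qed.

Definition st m := ({set 'I_m} * {set 'I_m})%type.

Definition prevX m N (h : {ffun 'I_N -> st m}) (j : nat) : {set 'I_m} :=
  if j is k.+1 then odflt set0 (omap (fun i => (h i).1) (insub k)) else set0.

Definition ext m N (g : {ffun 'I_N -> st m}) (p : st m) : {ffun 'I_N.+1 -> st m} :=
  [ffun i => if unlift ord_max i is Some k then g k else p].

Lemma ext_lift m N (g : {ffun 'I_N -> st m}) p k : ext g p (lift ord_max k) = g k.
Proof. by rewrite ffunE liftK. Qed.

Lemma ext_max m N (g : {ffun 'I_N -> st m}) p : ext g p ord_max = p.
Proof. by rewrite ffunE unlift_none. Qed.

Lemma prevX_ext m N (g : {ffun 'I_N -> st m}) p j : (j <= N)%N -> prevX (ext g p) j = prevX g j.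
Proof.
case: j => [//|k] hk /=.
have hk' : (k < N.+1)%N by apply: ltnW.
rewrite (insubT (fun k => k < N.+1)%N hk') (insubT (fun k => k < N)%N hk) /=.
have -> : (Sub k hk' : 'I_N.+1) = lift ord_max (Sub k hk) by apply: val_inj; rewrite /= /bump leqNgt hk.
by rewrite ext_lift.
Qed.

Lemma prevX_last m N (g : {ffun 'I_N -> st m}) p : prevX (ext g p) N.+1 = p.1.
Proof.
rewrite /= (insubT (fun k => k < N.+1)%N (ltnSn N)) /=.
have -> : (Sub N (ltnSn N) : 'I_N.+1) = ord_max by apply: val_inj.
by rewrite ext_max.
Qed.

Definition spl m N (h : {ffun 'I_N.+1 -> st m}) : {ffun 'I_N -> st m} * st m :=
  ([ffun k => h (lift ord_max k)], h ord_max).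

Lemma ext_bij m N : bijective (fun q : {ffun 'I_N -> st m} * st m => ext q.1 q.2).
Proof.
exists (@spl m N).
  by case=> g p; rewrite /spl ext_max; congr pair; apply/ffunP => k; rewrite ffunE ext_lift.
move=> h; apply/ffunP => i; rewrite /spl /= ffunE.
by case: (unliftP ord_max i) => [k ->|->] /=; rewrite ?ffunE.
Qed.

Definition W m N (c : nat -> nat -> int) (h : {ffun 'I_N -> st m}) (T : {set 'I_m}) : int :=
  (prevX h N == T)%:R * \prod_(j : 'I_N) ((colok (prevX h j) (h j).1 (h j).2)%:R *
                                          \prod_(i in (h j).2) c j i).

Lemma chain m N c T : \sum_(h : {ffun 'I_N -> st m}) W c h T = pm m c N set0 T.
Proof.
elim: N T => [|N IH] T.
  rewrite (big_pred1 [ffun i => (set0, set0)]); last first.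
    move=> h /=; apply/esym/eqP/ffunP => -[k hk]; exfalso; by rewrite ltn0 in hk.
  by rewrite /W big_ord0 mulr1.
rewrite (reindex _ (onW_bij _ (@ext_bij m N))) /= -(pair_bigA _ (fun g p => W c (ext g p) T)) /=.
have E1 : forall g p, W c (ext g p) T = (p.1 == T)%:R *
   ((\prod_(j : 'I_N) ((colok (prevX g j) (g j).1 (g j).2)%:R * \prod_(i in (g j).2) c j i)) *
    ((colok (prevX g N) p.1 p.2)%:R * \prod_(i in p.2) c N i)).
  move=> g p; rewrite /W prevX_last big_ord_recr /=; congr (_ * (_ * _)).
    apply: eq_bigr => j _.
    have -> : widen_ord (leqnSn N) j = lift ord_max j.
      by apply: val_inj; rewrite /= /bump leqNgt ltn_ord.
    by rewrite ext_lift /= prevX_ext // ltnW.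
  by rewrite ext_max prevX_ext.
under eq_bigr do under eq_bigr do rewrite E1.
have E2 : forall g, \sum_(p : st m) (p.1 == T)%:R *
   ((\prod_(j : 'I_N) ((colok (prevX g j) (g j).1 (g j).2)%:R * \prod_(i in (g j).2) c j i)) *
    ((colok (prevX g N) p.1 p.2)%:R * \prod_(i in p.2) c N i)) =
   \sum_S ((prevX g N == S)%:R * \prod_(j : 'I_N) ((colok (prevX g j) (g j).1 (g j).2)%:R *
            \prod_(i in (g j).2) c j i)) * K (c N) S T.
  move=> g.
  rewrite [RHS](bigD1 (prevX g N)) //= eqxx mul1r [X in _ = _ + X]big1 ?addr0; last first.
    by move=> S; rewrite eq_sym => /negbTE ->; rewrite !mul0r.
  rewrite -(pair_bigA _ (fun X Y => (X == T)%:R *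
   ((\prod_(j : 'I_N) ((colok (prevX g j) (g j).1 (g j).2)%:R * \prod_(i in (g j).2) c j i)) *
    ((colok (prevX g N) X Y)%:R * \prod_(i in Y) c N i)))) /=.
  rewrite (bigD1 T) //= [X in _ + X = _]big1 ?addr0; last first.
    by move=> X /negbTE HX; apply: big1 => Y _; rewrite HX mul0r.
  rewrite /K big_distrr /= [RHS]big_mkcond /=; apply: eq_bigr => Y _.
  rewrite eqxx mul1r; case: (colok _ _ _); by rewrite ?mul1r ?mul0r ?mulr0.
under eq_bigr do rewrite E2.
rewrite exchange_big /= /mmul; apply: eq_bigr => S _.
by rewrite -big_distrl /= -IH.
Qed.

Definition toS m N (h : {ffun 'I_N -> st m}) : {set gedge m N} :=
  [set e : gedge m N | let: (b, (i, j)) := e in i \in (if b then (h j).2 else (h j).1)].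

Definition ofS m N (S : {set gedge m N}) : {ffun 'I_N -> st m} :=
  [ffun j => ([set i | (false, (i, j)) \in S], [set i | (true, (i, j)) \in S])].

Lemma toS_bij m N : bijective (@toS m N).
Proof.
exists (@ofS m N).
  by move=> h; apply/ffunP => j; rewrite ffunE; case E: (h j) => [X Y];
     congr pair; apply/setP => i; rewrite !inE E.
by move=> S; apply/setP => -[[] [i j]]; rewrite !inE ffunE /= inE.
Qed.

Lemma card_cond (T : finType) (A : {set T}) (P : pred T) :
  #|[set e in A | P e]| = (\sum_e ((e \in A) && P e : nat))%N.
Proof.
rewrite -sum1_card big_mkcond /=; apply: eq_bigr => e _; rewrite !inE.
by case: (_ && _).
Qed.

Lemma sum_ord_eq n (a : 'I_n) (F : 'I_n -> bool) :
  (\sum_(x : 'I_n) ((F x) && ((a : nat) == x)) : nat)%N = F a.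
Proof.
rewrite (bigD1 a) //= eqxx andbT big1 ?addn0 // => x hx.
by rewrite (_ : (a : nat) == x = false) ?andbF // eq_sym; apply/negbTE.
Qed.

Lemma prevX_sum m N (h : {ffun 'I_N -> st m}) (i : 'I_m) (j : 'I_N) :
  (\sum_(j' : 'I_N) ((i \in (h j').1) && ((j : nat) == j'.+1)) : nat)%N = (i \in prevX h j).
Proof.
case: j => jv hj; case: jv hj => [|k] hk /=.
  by rewrite in_set0 big1 // => x _; rewrite andbF.
have hk' : (k < N)%N by apply: ltnW.
rewrite (insubT (fun k => k < N)%N hk') /=.
rewrite (bigD1 (Sub k hk')) //= eqxx andbT big1 ?addn0 // => x hx.
case: eqP => [E|]; last by rewrite andbF.
exfalso; move: hx => /eqP; apply; apply: val_inj => /=; lia.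
Qed.

Lemma cov_count m N (h : {ffun 'I_N -> st m}) (i : 'I_m) (j : 'I_N) :
  #|[set e in toS h | edge_covers e (i, j)]| =
  ((i \in (h j).1) + (i \in prevX h j) + (i \in (h j).2) + belowc (h j).2 i)%N.
Proof.
rewrite card_cond.
pose G (b : bool) (ij : 'I_m * 'I_N) : nat := ((b, ij) \in toS h) && edge_covers (b, ij) (i, j).
rewrite (eq_bigr (fun e => G e.1 e.2)); last by case.
rewrite -pair_bigA /= big_bool /=.
pose G1 (b : bool) (i' : 'I_m) (j' : 'I_N) : nat := G b (i', j').
rewrite (eq_bigr (fun e => G1 true e.1 e.2)); last by case.
rewrite [X in (_ + X)%N](eq_bigr (fun e => G1 false e.1 e.2)); last by case.
rewrite -!pair_bigA /= /G1 /G.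
have Et : (\sum_(i' : 'I_m) \sum_(j' : 'I_N)
   (((true, (i', j')) \in toS h) && edge_covers (true, (i', j')) (i, j) : nat))%N =
   ((i \in (h j).2) + belowc (h j).2 i)%N.
  transitivity (\sum_(i' : 'I_m) (((i' \in (h j).2) && ((i : nat) == i')) +
                                   ((i' \in (h j).2) && ((i : nat) == i'.+1))))%N.
    apply: eq_bigr => i' _.
    rewrite (eq_bigr (fun j' => ((i' \in (h j').2) && (((i : nat) == i') || ((i : nat) == i'.+1)))
                                && ((j : nat) == j') : nat)); last first.
      move=> j' _; rewrite inE /=.
      by rewrite -andb_orl andbA.
    rewrite (sum_ord_eq j (fun j' => (i' \in (h j').2) && (((i : nat) == i') || ((i : nat) == i'.+1)))).
    case: (i' \in _) => //=.
    case: eqP => [->|] /=; last by case: (_ == _).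
    by rewrite (_ : (i' == i'.+1 :> nat) = false) //; lia.
  rewrite big_split /=; congr (_ + _)%N.
    exact: (sum_ord_eq i (fun i' => i' \in (h j).2)).
  rewrite /belowc [RHS]big_mkcond /=; apply: eq_bigr => k _.
  by case: (k \in _) => //=; rewrite eq_sym.
have Ef : (\sum_(i' : 'I_m) \sum_(j' : 'I_N)
   (((false, (i', j')) \in toS h) && edge_covers (false, (i', j')) (i, j) : nat))%N =
   ((i \in (h j).1) + (i \in prevX h j))%N.
  rewrite exchange_big /=.
  transitivity (\sum_(j' : 'I_N) (((i \in (h j').1) && ((j : nat) == j')) +
                                   ((i \in (h j').1) && ((j : nat) == j'.+1))))%N.
    apply: eq_bigr => j' _.
    rewrite (eq_bigr (fun i' => ((i' \in (h j').1) && (((j : nat) == j') || ((j : nat) == j'.+1)))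
                                && ((i : nat) == i') : nat)); last first.
      move=> i' _; rewrite inE /=.
      by rewrite -andb_orr; case: (i' \in _); case: (_ == _); case: (_ || _).
    rewrite (sum_ord_eq i (fun i' => (i' \in (h j').1) && (((j : nat) == j') || ((j : nat) == j'.+1)))).
    case: (i \in _) => //=.
    case: eqP => [->|] /=; last by case: (_ == _).
    by rewrite (_ : (j' == j'.+1 :> nat) = false) //; lia.
  rewrite big_split /=; congr (_ + _)%N.
    exact: (sum_ord_eq j (fun j' => i \in (h j').1)).
  exact: prevX_sum.
rewrite Et Ef; lia.
Qed.

Lemma prevX_S m N (h : {ffun 'I_N -> st m}) k (hk : (k < N)%N) :
  prevX h k.+1 = (h (Ordinal hk)).1.
Proof.
rewrite /= (insubT (fun k => k < N)%N hk) /=.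
by congr (h _).1; apply: val_inj.
Qed.

Lemma pm_toS m N (h : {ffun 'I_N -> st m}) :
  perfect_matching (toS h) =
  [forall j : 'I_N, colok (prevX h j) (h j).1 (h j).2] && (prevX h N == set0).
Proof.
rewrite /perfect_matching.
apply/andP/andP => [[/forall_inP V /forallP C]|[/forallP Cj /eqP P0]]; split.
- apply/forallP => j; apply/forallP => i; apply/andP; split.
    apply/implyP => iY; have := V (true, (i, j)); rewrite inE /=; exact.
  by have := C (i, j); rewrite cov_count (addnC (i \in (h j).1)).
- case: N h V {C} => [|k] h V; first by [].
  rewrite (prevX_S h (ltnSn k)); apply/eqP/setP => i; rewrite in_set0.
  apply/negP => iX; have := V (false, (i, Ordinal (ltnSn k))); rewrite inE /= => H.
  by have := H iX; rewrite ltnn.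
- apply/forall_inP => -[[] [i j]]; rewrite inE /= => iX.
    by have := Cj j => /forallP /(_ i) /andP [/implyP ->].
  rewrite ltnNge; apply/negP => hj.
  have hjN : (j.+1 = N)%N by have := ltn_ord j; lia.
  have : i \in prevX h N.
    have -> : prevX h N = prevX h j.+1 by rewrite hjN.
    by rewrite (prevX_S h (ltn_ord j)); have -> : Ordinal (ltn_ord j) = j by apply: val_inj.
  by rewrite P0 in_set0.
- apply/forallP => -[i j]; rewrite cov_count (addnC (i \in (h j).1)).
  by have := Cj j => /forallP /(_ i) /andP [].
Qed.

Lemma weight_toS m G (h : {ffun 'I_(ncols G) -> st m}) :
  (forall i j, hw G i j = 1) ->
  \prod_(e in toS h) edge_weight e = \prod_(j : 'I_(ncols G)) \prod_(i in (h j).2) vw G i j.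
Proof.
move=> Hw.
rewrite big_mkcond /=.
pose F (b : bool) (ij : 'I_m * 'I_(ncols G)) :=
  if (b, ij) \in toS h then @edge_weight m G (b, ij) else 1.
rewrite (eq_bigr (fun e => F e.1 e.2)); last by case.
rewrite -pair_bigA /= big_bool /= [X in _ * X]big1 ?mulr1; last first.
  by case=> i j _; rewrite /F; case: ifP => //= _; rewrite Hw.
pose F1 (i : 'I_m) (j : 'I_(ncols G)) := F true (i, j).
rewrite (eq_bigr (fun e => F1 e.1 e.2)); last by case.
rewrite -pair_bigA /= exchange_big /=; apply: eq_bigr => j _.
rewrite [RHS]big_mkcond /=; apply: eq_bigr => i _.
by rewrite /F1 /F inE.
Qed.

Lemma prod_ind n (b : 'I_n -> bool) (x : 'I_n -> int) :
  \prod_(j : 'I_n) ((b j)%:R * x j) = [forall j, b j]%:R * \prod_(j : 'I_n) x j.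
Proof.
rewrite big_split /=; congr (_ * _).
case: (boolP [forall j, b j]) => [/forallP H|/forallPn [j /negbTE Hj]].
  by apply: big1 => j _; rewrite H.
by rewrite (bigD1 j) //= Hj mul0r.
Qed.

Lemma Msum_PG m G : (forall i j, hw G i j = 1) -> Msum m G = PG m G set0 set0.
Proof.
move=> Hw.
rewrite /PG -chain /Msum (reindex _ (onW_bij _ (@toS_bij m (ncols G)))) /=.
rewrite big_mkcond /=; apply: eq_bigr => h _.
rewrite pm_toS /W prod_ind weight_toS //.
by case: [forall _, _]; case: (prevX h _ == set0); rewrite /= ?mul1r ?mul0r.
Qed.

Lemma hw_Gmn n i j : hw (Gmn n) i j = 1.
Proof. by rewrite /Gmn; case: ifP. Qed.

Lemma hw_fold G ns : (forall i j, hw G i j = 1) ->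
  forall i j, hw (foldl (fun G n => adjoin G (Gmn n)) G ns) i j = 1.
Proof.
elim: ns G => [|n ns IH] G HG //=.
apply: IH => i j /=; rewrite HG hw_Gmn.
by case: ifP => //; case: ifP.
Qed.

Lemma PG_fold m G ns : PG m (foldl (fun G n => adjoin G (Gmn n)) G ns) =
  foldl mmul (PG m G) (map (Q m) ns).
Proof.
elim: ns G => [|n ns IH] G //=.
by rewrite IH PG_adjoin PG_Gmn.
Qed.

Unset Implicit Arguments.

Theorem mainTheorem3 (m : nat) (n0 : int) (ns : seq int) :
  (1 <= m)%N ->
  Msum m (adjoin_all n0 ns) = Msum m (Gmn (n0 + \sum_(n <- ns) n)).
Proof.
move=> _.
rewrite [LHS]Msum_PG; last by apply: hw_fold => i j; apply: hw_Gmn.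
rewrite [RHS]Msum_PG; last by move=> i j; apply: hw_Gmn.
by rewrite /adjoin_all PG_fold PG_Gmn Qfold PG_Gmn.
Qed.
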